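(* Let $R$ be an execution of the algorithm described in the context that starts from a well-initialized system state and includes a complete invocation of binary consensus. Suppose there is a system state $c\in R$ in which $\mathsf{result}_i()=v\in\{0,1\}$ for a correct processor $p_i$. Then there is a correct processor $p_j$ and a step of $R$ between $R$'s starting state and $c$ in which $p_j$ invokes $\mathsf{propose}_j(v)$.
   Context: System model. There are $n$ processors $p_1,\dots,p_n$ with unique identifiers, at most $t$ of which are Byzantine, where $n\ge 3t+1$; $\mathit{Correct}$ denotes the set of indices of non-faulty processors. A Byzantine processor computes its state according to the algorithm, but an adversary may arbitrarily modify, delay or remove the messages it sends. Processors cannot impersonate others, and messages between correct processors are private and cannot be altered. The system is asynchronous message passing. Every pair of processors is joined by a bidirectional channel of bounded capacity that may lose, duplicate and reorder packets, but a message sent infinitely often is received infinitely often. The scheduling of message arrivals does not depend on coin values. A common coin provides $\mathrm{randomBit}(r)$ for $r\in\mathbb{Z}^+$: all correct processors obtain the same bit $b_r$, with $\Pr(b_r=0)=\Pr(b_r=1)=1/2$, and the $b_r$ are independent. $M\in\mathbb{Z}^+$ is a fixed constant. The algorithm (code of $p_i$; $x_i$ denotes $p_i$'s copy of variable $x$). Local state: an integer $r\in\{0,\dots,M\}$; an array $est[0..M{+}1][1..n]$ whose entries are subsets of $\{0,1\}$; and an array $aux[0..M{+}1][1..n]$ whose entries lie in $\{0,1,\bot\}$. $\mathit{initState}$ means $r=0$, every $est$ entry equal to $\emptyset$, and every $aux$ entry equal to $\bot$. Let $\mathit{binValues}(r,x)=\{y\in\{0,1\}: |\{j: y\in est[r][j]\}|\ge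 x\}$. $\mathsf{infoResult}()$ is defined as follows: if there is a set $S$ of processors with $|S|\ge n-t$ and $aux[r][j]\in \mathit{binValues}(r,2t{+}1)$ for all $p_j\in S$, it returns $\{aux[r][j]:p_j\in S\}$ for such an $S$; otherwise it returns $\emptyset$. - $\mathsf{propose}(v)$, $v\in\{0,1\}$: set $(r,est,aux)\gets\mathit{initState}$, then $est[0][i]\gets\{v\}$. - $\mathsf{result}()$: if $est[M{+}1][i]$ is a singleton $\{v\}$, return $v$; else if $r\ge M$ and $\mathsf{infoResult}()\ne\emptyset$, return the error symbol $\boxtimes$; else return $\bot$. - $\mathsf{decide}(x)$: for every $r'\in\{r,\dots,M{+}1\}$ with $est[r'][i]=\emptyset$ or $aux[r'][i]=\bot$, set $est[r'][i]\gets\{x\}$ and $aux[r'][i]\gets x$. - $\mathsf{tryToDecide}(values)$: if $values$ is not a singleton, set $est[r][i]\gets\{\mathrm{randomBit}(r)\}$. Otherwise $values=\{v\}$: set $est[r][i]\gets\{v\}$, and if $v=\mathrm{randomBit}(r)$, call $\mathsf{decide}(v)$. - Do-forever loop. Each iteration does the following, provided $(r,est,aux)\ne\mathit{initState}$: (1) if $est[0][i]$ contains two values, replace it by $\{w\}$ for some $w\in est[0][i]$; (2) for every $r'\in\{1,\dots,r-1\}$ with $est[r'][i]=\emptyset$ or $aux[r'][i]=\bot$, set $est[r'][i]\gets est[0][i]$ and $aux[r'][i]\gets x$ for some $x\in est[0][i]$; (3) set $r\gets\min\{r+1,M\}$; (4) repeat { if some $w\in\mathit{binValues}(r,2t{+}1)$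 exists and ($aux[r][i]=\bot$ or $aux[r][i]\notin\mathit{binValues}(r,2t{+}1)$), set $aux[r][i]\gets w$; send $\mathrm{EST}(\mathsf{True},r,est[r{-}1][i]\cup\mathit{binValues}(r,t{+}1),aux[r][i])$ to every processor } until $\mathsf{infoResult}()\ne\emptyset$; (5) call $\mathsf{tryToDecide}(\mathsf{infoResult}())$. - Upon arrival of $\mathrm{EST}(a,\rho,V,u)$ from $p_j$: set $est[\rho][j]\gets est[\rho][j]\cup V$ and $aux[\rho][j]\gets u$; if $a=\mathsf{True}$, send $\mathrm{EST}(\mathsf{False},\rho,est[\rho{-}1][i],aux[r][i])$ to $p_j$. Definitions. - A system state is well-initialized if every correct processor has $(r_i,est_i,aux_i)=\mathit{initState}$ and no channel between two correct processors contains $\mathrm{EST}$ messages. - An execution includes a complete invocation of binary consensus if every correct processor invokes $\mathsf{propose}_i()$ exactly once in it. *)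

(* Defs.v *)
From mathcomp Require Import all_boot.
Set Implicit Arguments.
Unset Strict Implicit.
Unset Printing Implicit Defensive.

(*   n  : number of processors, t : bound on Byzantine processors,           *)
(*   M  : the fixed constant bounding the rounds,                            *)
(*   coin r : the common coin value randomBit(r) (same for all processors),  *)

(* A message EST(a, rho, V, u); u = None encodes the symbol bottom. *)
Definition msg := (bool * nat * {set bool} * option bool)%type.
Definition mkEST (a : bool) (rho : nat) (V : {set bool}) (u : option bool) : msg :=
  (a, rho, V, u).

(* Local state of a processor: round r, arrays est[0..M+1][1..n] and
   aux[0..M+1][1..n] (represented as functions on nat; only indices
   0..M+1 are meaningful), and a program counter: lpc = false means
   "at the start of a do-forever iteration", lpc = true means "inside the
   repeat-until loop (4)". *)
Record lstate (n : nat) := LS {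
  lr   : nat;
  lest : nat -> 'I_n -> {set bool};
  laux : nat -> 'I_n -> option bool;
  lpc  : bool }.

Definition isInit (n M : nat) (l : lstate n) : Prop :=
  lr l = 0 /\
  forall (k : nat) (j : 'I_n), k <= M.+1 -> lest l k j = set0 /\ laux l k j = None.

Definition binValues (n : nat) (l : lstate n) (r x : nat) : {set bool} :=
  [set y : bool | x <= #|[set j : 'I_n | y \in lest l r j]| ].

Definition infoOK (n t : nat) (l : lstate n) (S : {set 'I_n}) : bool :=
  (n - t <= #|S|) &&
  [forall j in S, if laux l (lr l) j is Some w
                  then w \in binValues l (lr l) (2 * t + 1) else false].

Definition infoVals (n : nat) (l : lstate n) (S : {set 'I_n}) : {set bool} :=
  [set w : bool | [exists j in S, laux l (lr l) j == Some w]].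

(* infoResult() is nondeterministic (choice of S): relation "vals may be
   returned by infoResult()". *)
Definition infoResult (n t : nat) (l : lstate n) (vals : {set bool}) : Prop :=
  (exists S : {set 'I_n}, infoOK t l S /\ vals = infoVals l S) \/
  ((forall S : {set 'I_n}, ~~ infoOK t l S) /\ vals = set0).

Definition infoNonEmpty (n t : nat) (l : lstate n) : bool :=
  [exists S : {set 'I_n}, infoOK t l S && (infoVals l S != set0)].

(* Outcome of result(): a value, the error symbol, or bottom. *)
Inductive outcome := OVal of bool | OErr | OBot.

Definition result (n t M : nat) (i : 'I_n) (l : lstate n) : outcome :=
  if [pick v : bool | lest l M.+1 i == [set v]] is Some v then OVal v
  else if (M <= lr l) && infoNonEmpty t l then OErr else OBot.

(* propose_i(v): (r, est, aux) <- initState; est[0][i] <- {v}.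
   The invocation (re)starts the do-forever loop (pc reset). *)
Definition propose (n : nat) (i : 'I_n) (v : bool) : lstate n :=
  LS 0 (fun k j => if (k == 0) && (j == i) then [set v] else set0)
       (fun _ _ => None) false.

Definition setEst (n : nat) (l : lstate n) (k : nat) (i : 'I_n) (V : {set bool}) :=
  LS (lr l) (fun k' j => if (k' == k) && (j == i) then V else lest l k' j)
     (laux l) (lpc l).

Definition setAux (n : nat) (l : lstate n) (k : nat) (i : 'I_n) (u : option bool) :=
  LS (lr l) (lest l) (fun k' j => if (k' == k) && (j == i) then u else laux l k' j)
     (lpc l).

Definition setPc (n : nat) (l : lstate n) (b : bool) :=
  LS (lr l) (lest l) (laux l) b.

Definition decideCond (n M : nat) (i : 'I_n) (l : lstate n) (k : nat) : bool :=
  (lr l <= k <= M.+1) && ((lest l k i == set0) || (laux l k i == None)).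

Definition decide (n M : nat) (i : 'I_n) (x : bool) (l : lstate n) : lstate n :=
  LS (lr l)
     (fun k j => if (j == i) && decideCond M i l k then [set x] else lest l k j)
     (fun k j => if (j == i) && decideCond M i l k then Some x else laux l k j)
     (lpc l).

Definition tryToDecide (n M : nat) (coin : nat -> bool) (i : 'I_n)
    (vals : {set bool}) (l : lstate n) : lstate n :=
  let b := coin (lr l) in
  if [pick v : bool | vals == [set v]] is Some v then
    let l1 := setEst l (lr l) i [set v] in
    if v == b then decide M i v l1 else l1
  else setEst l (lr l) i [set b].

(* Steps (1)-(3) of a do-forever iteration (guarded by (r,est,aux) <> initState).
   w0 resolves the choice in (1), f r' resolves the choice of x in (2). *)
Definition loopStart (n M : nat) (i : 'I_n) (l l' : lstate n) : Prop :=
  ~ isInit M l /\ lpc l = false /\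
  exists (w0 : bool) (f : nat -> bool),
    let e0 := if #|lest l 0 i| == 2 then [set w0] else lest l 0 i in
    let c2 := fun k => (1 <= k < lr l) && ((lest l k i == set0) || (laux l k i == None)) in
    (forall k, c2 k -> f k \in e0) /\
    l' = LS (minn (lr l).+1 M)
            (fun k j => if j == i then
                          (if k == 0 then e0 else if c2 k then e0 else lest l k j)
                        else lest l k j)
            (fun k j => if (j == i) && c2 k then Some (f k) else laux l k j)
            true.

(* The aux update at the beginning of the body of the repeat loop (4). *)
Definition auxUpdate (n t : nat) (i : 'I_n) (l l1 : lstate n) : Prop :=
  let r := lr l in
  let bv := binValues l r (2 * t + 1) in
  let c := (bv != set0) &&
           (if laux l r i is Some a then a \notin bv else true) in
  (c /\ exists w, w \in bv /\ l1 = setAux l r i (Some w)) \/ (~~ c /\ l1 = l).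

(* One execution of the body of the repeat loop (4), including the "until"
   test and, if the loop is left, step (5).  m is the message EST(True, ...)
   sent to every processor. *)
Definition repeatStep (n t M : nat) (coin : nat -> bool) (i : 'I_n)
    (l : lstate n) (m : msg) (l' : lstate n) : Prop :=
  ~ isInit M l /\ lpc l = true /\
  exists l1, auxUpdate t i l l1 /\
    m = mkEST true (lr l) (lest l (lr l).-1 i :|: binValues l (lr l) t.+1)
              (laux l1 (lr l) i) /\
    (if infoNonEmpty t l1 then
       exists vals, infoResult t l1 vals /\ l' = setPc (tryToDecide M coin i vals l1) false
     else l' = l1).

(* Upon arrival of EST(a, rho, V, u) from p_j at p_i: new local state and the
   (optional) reply.  Messages whose round index is outside 0..M+1 are
   discarded. *)
Definition receive (n M : nat) (i j : 'I_n) (m : msg) (l : lstate n)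
    : lstate n * option msg :=
  let: (a, rho, V, u) := m in
  if rho <= M.+1 then
    let l1 := setAux (setEst l rho j (lest l rho j :|: V)) rho j u in
    (l1, if a then Some (mkEST false rho (lest l1 rho.-1 i) (laux l1 (lr l1) i))
         else None)
  else (l, None).

(* gchan g j k : content of the channel from p_j to p_k.                     *)
Record gstate (n : nat) := GS {
  gloc  : 'I_n -> lstate n;
  gchan : 'I_n -> 'I_n -> seq msg }.

Definition updL (n : nat) (f : 'I_n -> lstate n) (i : 'I_n) (x : lstate n) :=
  fun k => if k == i then x else f k.

Definition updC (n : nat) (c : 'I_n -> 'I_n -> seq msg) (a b : 'I_n) (x : seq msg) :=
  fun k k' => if (k == a) && (k' == b) then x else c k k'.

(* Sending m on a bounded channel of capacity cap: the packet may be lost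
   (in particular, it is lost when the channel is full). *)
Definition sendOk (cap : nat) (ch ch' : seq msg) (m : msg) : Prop :=
  ch' = ch \/ (size ch < cap /\ ch' = rcons ch m).

Inductive action (n : nat) :=
  | APropose of 'I_n & bool
  | ALoop    of 'I_n             (* steps (1)-(3) of an iteration of p_i *)
  | ARepeat  of 'I_n             (* one round of the repeat loop (4) (+ (5)) *)
  | ARecv    of 'I_n & 'I_n      (* ARecv j i : p_i receives a packet from p_j *)
  | AFault   of 'I_n & 'I_n      (* channel j->k loses / duplicates / reorders *)
  | AInject  of 'I_n & 'I_n.     (* adversary rewrites channel j->k, j Byzantine *)

Definition step (n t M cap : nat) (coin : nat -> bool) (Correct : {set 'I_n})
    (g : gstate n) (a : action n) (g' : gstate n) : Prop :=
  match a with
  | APropose i v => g' = GS (updL (gloc g) i (propose i v)) (gchan g)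
  | ALoop i => exists l', loopStart M i (gloc g i) l' /\
                 g' = GS (updL (gloc g) i l') (gchan g)
  | ARepeat i => exists m l' (out : 'I_n -> seq msg),
                 repeatStep t M coin i (gloc g i) m l' /\
                 (forall k, sendOk cap (gchan g i k) (out k) m) /\
                 g' = GS (updL (gloc g) i l')
                         (fun k k' => if k == i then out k' else gchan g k k')
  | ARecv j i => exists m, m \in gchan g j i /\
                 let c1 := updC (gchan g) j i (rem m (gchan g j i)) in
                 let: (l', rep) := receive M i j m (gloc g i) in
                 match rep with
                 | None => g' = GS (updL (gloc g) i l') c1
                 | Some mr => exists ch', sendOk cap (c1 i j) ch' mr /\
                                g' = GS (updL (gloc g) i l') (updC c1 i j ch')
                 end
  | AFault j k => exists ch', {subset ch' <= gchan g j k} /\ size ch' <= cap /\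
                 g' = GS (gloc g) (updC (gchan g) j k ch')
  | AInject j k => j \notin Correct /\ exists ch', size ch' <= cap /\
                 g' = GS (gloc g) (updC (gchan g) j k ch')
  end.

Definition wellInitialized (n M : nat) (Correct : {set 'I_n}) (g : gstate n) : Prop :=
  (forall i, i \in Correct -> isInit M (gloc g i)) /\
  (forall i j, i \in Correct -> j \in Correct -> gchan g i j = [::]).

Definition isExecution (n t M cap : nat) (coin : nat -> bool) (Correct : {set 'I_n})
    (exec : nat -> gstate n) (acts : nat -> action n) : Prop :=
  forall m, step t M cap coin Correct (exec m) (acts m) (exec m.+1).

Definition completeInvocation (n : nat) (Correct : {set 'I_n}) (acts : nat -> action n) : Prop :=
  forall i, i \in Correct ->
    exists m v, acts m = APropose i v /\
      forall m' v', acts m' = APropose i v' -> m' = m.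

(* Main.v *)
Require Import Defs.
From mathcomp Require Import all_boot.
Set Implicit Arguments.
Unset Strict Implicit.

Definition good n M (Correct : {set 'I_n}) (P : bool -> Prop) (l : lstate n) :=
  lr l <= M /\ forall k j, k <= M.+1 -> j \in Correct ->
     (forall v, v \in lest l k j -> P v) /\ (forall v, laux l k j = Some v -> P v).

Definition msgOK (P : bool -> Prop) (m : msg) :=
  (forall v, v \in m.1.2 -> P v) /\ (forall v, m.2 = Some v -> P v).

Lemma binV n t (Correct : {set 'I_n}) (P : bool -> Prop) (l : lstate n) r x v :
  #|~: Correct| <= t -> t < x ->
  (forall j, j \in Correct -> forall v, v \in lest l r j -> P v) ->
  v \in binValues l r x -> P v.
Proof.
move=> hC hx hj; rewrite /binValues inE => hc.
case: (boolP [exists j in Correct, v \in lest l r j]).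
  by move=> /exists_inP [j hj1 hj2]; exact: hj j hj1 v hj2.
rewrite negb_exists_in => /forall_inP hn.
have : #|[set j : 'I_n | v \in lest l r j]| <= t.
  apply: leq_trans hC; apply: subset_leq_card; apply/subsetP => j.
  rewrite !inE => hv; apply/negP => hj'; by move: (hn j hj'); rewrite hv.
move=> h; have := leq_trans hc h; by rewrite leqNgt hx.
Qed.

Lemma setEst_good n M (Correct : {set 'I_n}) P (l : lstate n) k i (V : {set bool}) :
  (i \in Correct -> forall v, v \in V -> P v) -> good M Correct P l ->
  good M Correct P (setEst l k i V).
Proof.
move=> hV [hr hg]; split => // k' j hk hj; have [h1 h2] := hg k' j hk hj.
split => //= v; case: ifP => [/andP [_ /eqP Ej] | _]; last exact: h1.
subst j; exact: hV.
Qed.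

Lemma setAux_good n M (Correct : {set 'I_n}) P (l : lstate n) k i (u : option bool) :
  (i \in Correct -> forall v, u = Some v -> P v) -> good M Correct P l ->
  good M Correct P (setAux l k i u).
Proof.
move=> hV [hr hg]; split => // k' j hk hj; have [h1 h2] := hg k' j hk hj.
split => //= v; case: ifP => [/andP [_ /eqP Ej] | _]; last exact: h2.
subst j; exact: hV.
Qed.

Lemma setPc_good n M (Correct : {set 'I_n}) P (l : lstate n) b :
  good M Correct P l -> good M Correct P (setPc l b).
Proof. by []. Qed.

Lemma decide_good n M (Correct : {set 'I_n}) P (l : lstate n) i x :
  P x -> good M Correct P l -> good M Correct P (decide M i x l).
Proof.
move=> hx [hr hg]; split => // k' j hk hj; have [h1 h2] := hg k' j hk hj.
split => /= v; case: ifP => _.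
- by rewrite in_set1 => /eqP ->.
- exact: h1.
- by case=> <-.
- exact: h2.
Qed.

Lemma tryToDecide_good n M (Correct : {set 'I_n}) P (l : lstate n) coin i (vals : {set bool}) :
  (forall v, v \in vals -> P v) -> (exists w, w \in vals) ->
  good M Correct P l -> good M Correct P (tryToDecide M coin i vals l).
Proof.
move=> hv [w hw] hl; rewrite /tryToDecide.
case: pickP => [v /eqP Hv | Hn].
  have Pv : P v by apply: hv; rewrite Hv in_set1.
  have hl1 : good M Correct P (setEst l (lr l) i [set v]).
    by apply: setEst_good => // _ y; rewrite in_set1 => /eqP ->.
  case: ifP => _ //; exact: decide_good.
apply: setEst_good => // _ y; rewrite in_set1 => /eqP ->.
case: (boolP (coin (lr l) \in vals)) => hb; first exact: hv.
exfalso; have := Hn w; suff -> : vals == [set w] by [].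
apply/eqP/setP => z; rewrite in_set1.
case: (boolP (z == w)) => [/eqP -> // | hyw].
apply/negP => hy.
move: hb hw hy hyw; case: (coin (lr l)); case: w; case: z => //= hb hw hy; by rewrite ?hw ?hy in hb.
Qed.

Lemma loop_good n M (Correct : {set 'I_n}) P (l l' : lstate n) i :
  i \in Correct -> good M Correct P l -> loopStart M i l l' -> good M Correct P l'.
Proof.
move=> hi [hr hg] [_ [_ [w0 [f [hf ->]]]]].
set e0 := (if #|lest l 0 i| == 2 then [set w0] else lest l 0 i).
have he0 : forall v, v \in e0 -> P v.
  have [h0 _] := hg 0 i isT hi.
  rewrite /e0; case: ifP => [/eqP hc | _ ] v; last exact: h0.
  rewrite in_set1 => /eqP ->; apply: h0.
  have : lest l 0 i == setT.
    by rewrite eqEcard subsetT /= cardsT card_bool hc.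
  by move/eqP ->; rewrite inE.
split; first exact: geq_minr.
move=> k j hk hj; have [h1 h2] := hg k j hk hj; split => /= v.
- case: ifP => _; last exact: h1.
  case: ifP => _; first exact: he0.
  case: ifP => _; first exact: he0.
  exact: h1.
- case: ifP => [/andP [_ hc] [<-] | _]; last exact: h2.
  apply: he0; exact: hf.
Qed.

Lemma aux_good n t M (Correct : {set 'I_n}) P (l l1 : lstate n) i :
  #|~: Correct| <= t ->
  good M Correct P l -> auxUpdate t i l l1 -> good M Correct P l1.
Proof.
move=> hC hl [[_ [w [hw ->]]] | [_ ->]] //.
apply: setAux_good => // _ v [<-].
case: hl => hr hg.
apply: (binV hC _ _ hw); first by rewrite addn1 ltnS leq_pmull.
move=> j hj; exact: (hg _ j (leq_trans hr (leqnSn _)) hj).1.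
Qed.

Lemma aux_lr n t (i : 'I_n) (l l1 : lstate n) : auxUpdate t i l l1 -> lr l1 = lr l.
Proof. by move=> [[_ [w [_ ->]]] | [_ ->]]. Qed.

Lemma repeat_good n t M (Correct : {set 'I_n}) P coin (l l' : lstate n) i m :
  3 * t + 1 <= n -> #|~: Correct| <= t -> i \in Correct ->
  good M Correct P l -> repeatStep t M coin i l m l' ->
  good M Correct P l' /\ msgOK P m.
Proof.
move=> hn hC hi hl [_ [_ [l1 [hau [-> hif]]]]].
have hl1 := aux_good hC hl hau.
have elr := aux_lr hau.
case: (hl) => hr hg; case: (hl1) => hr1 hg1.
have hrS : lr l <= M.+1 by apply: leq_trans hr (leqnSn _).
split; last first.
  split => /= v.
  - rewrite inE => /orP [hv | hv].
    + apply: (hg _ i _ hi).1 hv; apply: leq_trans hrS; exact: leq_pred.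
    + apply: (binV hC (ltnSn t) _ hv) => j hj; exact: (hg _ j hrS hj).1.
  - exact: (hg1 _ i hrS hi).2.
move: hif; case: ifP => [hne [vals [hres ->]] | _ -> //].
apply: setPc_good; apply: tryToDecide_good => //.
- case: hres => [[S [hS ->]] | [hno _]].
  + move=> v; rewrite inE => /exists_inP [j hj /eqP hv].
    move: hS => /andP [_ /forall_inP hS]; move: (hS j hj); rewrite hv => hb.
    apply: (binV hC _ _ hb); first by rewrite addn1 ltnS leq_pmull.
    move=> j' hj'; rewrite elr; exact: (hg1 _ j' hrS hj').1.
  + move: hne => /existsP [S /andP [hS _]]; by move: (hno S); rewrite hS.
- case: hres => [[S [hS ->]] | [hno _]].
  + move: hS => /andP [hcard /forall_inP hS].
    have : 0 < #|S| by apply: leq_trans hcard; rewrite subn_gt0; apply: leq_trans hn; rewrite addn1 ltnS mulSn leq_addr.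
    case/card_gt0P => j hj; move: (hS j hj).
    case E: (laux l1 (lr l1) j) => [w|] // _; exists w.
    rewrite inE; apply/exists_inP; exists j => //; by rewrite E.
  + move: hne => /existsP [S /andP [hS _]]; by move: (hno S); rewrite hS.
Qed.

Lemma receive_good n M (Correct : {set 'I_n}) P (l : lstate n) i j m :
  i \in Correct -> good M Correct P l -> (j \in Correct -> msgOK P m) ->
  good M Correct P (receive M i j m l).1 /\
  (forall mr, (receive M i j m l).2 = Some mr -> msgOK P mr).
Proof.
case: m => [[[a rho] V] u] hi hl hm /=.
case: ifP => hrho //=.
have hl1 : good M Correct P
   (setAux (setEst l rho j (lest l rho j :|: V)) rho j u).
  apply: setAux_good; first by move=> hj; exact: (hm hj).2.
  apply: setEst_good => // hj v; rewrite inE => /orP [hv|hv].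
    exact: (hl.2 rho j hrho hj).1.
  exact: (hm hj).1.
clear hm; split => // mr; case: a => // -[<-].
case: hl1 => hr1 hg1.
split => /= v.
- apply: (hg1 _ i _ hi).1; apply: leq_trans hrho; exact: leq_pred.
- apply: (hg1 _ i _ hi).2; apply: leq_trans hr1 _; exact: leqnSn.
Qed.

Definition Inv n M (Correct : {set 'I_n}) (P : bool -> Prop) (g : gstate n) :=
  (forall i, i \in Correct -> good M Correct P (gloc g i)) /\
  (forall a b, a \in Correct -> b \in Correct -> forall m, m \in gchan g a b -> msgOK P m).

Lemma good_mono n M (Correct : {set 'I_n}) (P Q : bool -> Prop) l :
  (forall v, P v -> Q v) -> good M Correct P l -> good M Correct Q l.
Proof.
move=> hPQ [hr hg]; split => // k j hk hj; have [h1 h2] := hg k j hk hj.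
by split => v hv; apply: hPQ; [apply: h1 | apply: h2].
Qed.

Lemma Inv_mono n M (Correct : {set 'I_n}) (P Q : bool -> Prop) g :
  (forall v, P v -> Q v) -> Inv M Correct P g -> Inv M Correct Q g.
Proof.
move=> hPQ [hl hc]; split => [i hi | a b ha hb m hm].
  exact: good_mono hPQ (hl i hi).
have [h1 h2] := hc a b ha hb m hm.
by split => v hv; apply: hPQ; [apply: h1 | apply: h2].
Qed.

Lemma sendOk_mem P cap (ch ch' : seq msg) m :
  sendOk cap ch ch' m -> msgOK P m -> (forall x, x \in ch -> msgOK P x) ->
  forall x, x \in ch' -> msgOK P x.
Proof.
move=> [-> | [_ ->]] hm hch x; first exact: hch.
rewrite mem_rcons inE => /orP [/eqP -> // | ]; exact: hch.
Qed.

Lemma step_inv n t M cap coin (Correct : {set 'I_n}) P g a g' :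
  3 * t + 1 <= n -> #|~: Correct| <= t ->
  Inv M Correct P g -> step t M cap coin Correct g a g' ->
  (forall i v, a = APropose i v -> i \in Correct -> P v) ->
  Inv M Correct P g'.
Proof.
move=> hn hC [hl hc]; case: a => /=.
- move=> i v -> hprop; split => //= i' hi'; rewrite /updL.
  case: eqP => [E | _]; last exact: hl.
  subst i'; split => //= k j hk hj; split => x //=.
  case: ifP => _; last by rewrite inE.
  rewrite in_set1 => /eqP ->; exact: hprop.
- move=> i [l' [hls ->]] _; split => //= i' hi'; rewrite /updL.
  case: eqP => [E | _]; last exact: hl.
  subst i'; exact: loop_good hi' (hl i hi') hls.
- move=> i [m [l' [out [hrs [hsend ->]]]]] _.
  case: (boolP (i \in Correct)) => hi.
    have [hg' hm] := repeat_good hn hC hi (hl i hi) hrs.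
    split => /= [i' hi' | a b ha hb x].
      rewrite /updL; case: eqP => [_ // | _]; exact: hl.
    case: eqP => [E | _]; last exact: hc.
    subst a => hx; exact: (sendOk_mem (hsend b) hm (hc i b ha hb) hx).
  split => /= [i' hi' | a b ha hb x].
    rewrite /updL; case: eqP => [E | _]; last exact: hl.
    by subst i'; rewrite hi' in hi.
  case: eqP => [E | _]; last exact: hc.
  by subst a; rewrite ha in hi.
- move=> j i [m [hm H]] _; move: H.
  case E: (receive M i j m (gloc g i)) => [l' rep].
  have hmm : i \in Correct -> j \in Correct -> msgOK P m.
    move=> hi hj; exact: hc j i hj hi m hm.
  have hc1 : forall a b, a \in Correct -> b \in Correct -> forall x,
      x \in updC (gchan g) j i (rem m (gchan g j i)) a b -> msgOK P x.
    move=> a b ha hb x; rewrite /updC; case: ifP => [/andP [/eqP Ea /eqP Eb] | _].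
      subst a b => /mem_rem; exact: hc.
    exact: hc.
  have hloc : i \in Correct -> good M Correct P l'.
    move=> hi; have [h1 _] := receive_good hi (hl i hi) (hmm hi).
    by rewrite E in h1.
  have hlocs : forall i', i' \in Correct -> good M Correct P (updL (gloc g) i l' i').
    move=> i' hi'; rewrite /updL; case: eqP => [E' | _]; last exact: hl.
    subst i'; exact: hloc.
  case: rep E => [mr | ] E.
    move=> [ch' [hs ->]]; split => //= a b ha hb x.
    rewrite {1}/updC; case: ifP => [/andP [/eqP Ea /eqP Eb] | _]; last exact: hc1.
    subst a b => hx.
    have [_ h2] := receive_good ha (hl i ha) (hmm ha).
    have hmr : msgOK P mr by apply: h2; rewrite E.
    exact: (sendOk_mem hs hmr (hc1 i j ha hb) hx).
  by move=> ->; split.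
- move=> j k [ch' [hsub [_ ->]]] _; split => //= a b ha hb x.
  rewrite /updC; case: ifP => [/andP [/eqP Ea /eqP Eb] | _]; last exact: hc.
  subst a b => /hsub; exact: hc.
- move=> j k [hj [ch' [_ ->]]] _; split => //= a b ha hb x.
  rewrite /updC; case: ifP => [/andP [/eqP Ea /eqP Eb] | _]; last exact: hc.
  by subst a; rewrite ha in hj.
Qed.

Theorem lemma7 (n t M cap : nat) (coin : nat -> bool) (Correct : {set 'I_n})
    (exec : nat -> gstate n) (acts : nat -> action n) :
  3 * t + 1 <= n -> 0 < M -> #|~: Correct| <= t ->
  isExecution t M cap coin Correct exec acts ->
  wellInitialized M Correct (exec 0) ->
  completeInvocation Correct acts ->
  forall (k : nat) (i : 'I_n) (v : bool),
    i \in Correct ->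
    result t M i (gloc (exec k) i) = OVal v ->
    exists (j : 'I_n) (m : nat), j \in Correct /\ m < k /\ acts m = APropose j v.
Proof.
move=> hn hM hC hexec hwi _ k i v hi hres.
pose Pk := fun k v => exists (j : 'I_n) (m : nat), j \in Correct /\ m < k /\ acts m = APropose j v.
have hinv : forall k, Inv M Correct (Pk k) (exec k).
  elim=> [|k' IH].
    case: hwi => hl hc; split => [i' hi' | a b ha hb x]; last by rewrite hc.
    have [hr0 hz] := hl i' hi'; split; first by rewrite hr0.
    move=> k2 j hk hj; have [e1 e2] := hz k2 j hk; split => x; [by rewrite e1 inE | by rewrite e2].
  apply: (step_inv hn hC _ (hexec k')).
    apply: Inv_mono IH => x [j [m [hj [hm ha]]]]; exists j, m; split => //; split => //.
    exact: leqW.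
  by move=> j x hact hj; exists j, k'; split.
move: hres; rewrite /result; case: pickP => [w /eqP hw | _]; last by case: ifP.
case=> <-.
have [_ hg] := (hinv k).1 i hi.
apply: (hg M.+1 i (leqnn _) hi).1; by rewrite hw in_set1.
Qed.
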